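(* Let $f(x)=\max_{a\in A}(c_a+a\cdot x)$ be a homogeneous tropical signomial on $\mathbb{R}^n$, and let $H=\{x\in\mathbb{R}^n:\sum_j x_j=0\}$. Then $f$ attains a minimum over $H$ if and only if some cell $\sigma$ of the regular subdivision $\Delta(f)$ contains a point of the form $\lambda\mathbf{1}_n$, $\lambda\in\mathbb{R}$, in its relative interior (the central cell); in that case the set of minimizers of $f$ over $H$ is exactly the cell of $\overline{\mathrm{NC}}(f)$ dual to $\sigma$.
   Context: A tropical signomial is $f(x)=\max_{a\in A}(c_a+a\cdot x)$ with $A\subset\mathbb{R}^n_{\ge 0}$ finite and $c_a\in\mathbb{R}\cup\{-\infty\}$; its support is $\mathrm{supp}(f)=\{a\in A: c_a\neq-\infty\}$, assumed nonempty, with distinct exponents. $f$ is homogeneous if $\sum_j a_j$ is the same for all $a\in \mathrm{supp}(f)$. For $x\in\mathbb{R}^n$ let $B(x)=\{a\in\mathrm{supp}(f): c_a+a\cdot x=f(x)\}$. The regular subdivision $\Delta(f)$ (induced by lifting $a$ to $(a,c_a)$ and taking upper faces) has as cells the polytopes $\mathrm{conv}(B(x))$, $x\in\mathbb{R}^n$; a cell $\sigma=\mathrm{conv}(B(x))$ determines the set $B(x)$. The normal complex $\mathrm{NC}(f)$ consists of the polyhedra $D(\sigma)=\{y\in\mathbb{R}^n: B(x)\subseteq B(y)\}$ for cells $\sigma=\mathrm{conv}(B(x))$ (the regions where $f$ is linear and their faces); $D(\sigma)$ is the cell dual to $\sigma$. $\overline{\mathrm{NC}}(f)$ is the complex $\{D(\sigma)\cap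 H\}$, and the cell of $\overline{\mathrm{NC}}(f)$ dual to $\sigma$ is $D(\sigma)\cap H$. *)

(* Defs.v *)
From HB Require Import structures.
From mathcomp Require Import all_boot all_order all_algebra.
From mathcomp Require Import reals.
Set Implicit Arguments. Unset Strict Implicit. Unset Printing Implicit Defensive.
Import Order.TTheory GRing.Theory Num.Theory.
Local Open Scope ring_scope.

Section TropSig.
Variables (R : realType) (n : nat).
Implicit Types (a x y p q : 'rV[R]_n).

Definition dotv a x : R := \sum_(j < n) a ord0 j * x ord0 j.

(* A tropical signomial is given by a finite list A of exponents together
   with coefficients c : R^n -> R ∪ {-oo}, encoded as option R
   (None = -oo). *)
Variables (A : seq 'rV[R]_n) (c : 'rV[R]_n -> option R).

Definition supp : seq 'rV[R]_n := [seq a <- A | c a != None].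

Definition coef a : R := odflt 0 (c a).

Definition term a x : R := coef a + dotv a x.

(* f(x) = max_{a in supp} (c_a + a.x); the default value is the term of the
   first element of the support (the support is assumed nonempty). *)
Definition tsig x : R :=
  \big[Num.max/term (head 0 supp) x]_(a <- supp) term a x.

Definition homogeneous : Prop :=
  exists d : R, forall a, a \in supp -> \sum_(j < n) a ord0 j = d.

Definition Bset x : seq 'rV[R]_n := [seq a <- supp | term a x == tsig x].

End TropSig.

Section Convex.
Variables (R : realType) (n : nat).

Definition in_conv (S : seq 'rV[R]_n) (p : 'rV[R]_n) : Prop :=
  exists w : 'rV[R]_n -> R,
    [/\ forall a, a \in S -> 0 <= w a,
        \sum_(a <- S) w a = 1 &
        p = \sum_(a <- S) w a *: a].

Definition in_aff (S : seq 'rV[R]_n) (p : 'rV[R]_n) : Prop :=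
  exists w : 'rV[R]_n -> R,
    \sum_(a <- S) w a = 1 /\ p = \sum_(a <- S) w a *: a.

Definition in_relint_conv (S : seq 'rV[R]_n) (p : 'rV[R]_n) : Prop :=
  in_conv S p /\
  exists e : R, 0 < e /\
    forall q, in_aff S q -> (forall j, `|q ord0 j - p ord0 j| < e) ->
      in_conv S q.

Definition inH (x : 'rV[R]_n) : Prop := \sum_(j < n) x ord0 j = 0.

End Convex.

(* Main.v *)
Require Import Defs.
From HB Require Import structures.
From mathcomp Require Import all_boot all_order all_algebra.
From mathcomp Require Import reals.
Import Order.TTheory GRing.Theory Num.Theory.
Local Open Scope ring_scope.
From mathcomp Require Import ring lra.
Set Implicit Arguments. Unset Strict Implicit. Unset Printing Implicit Defensive.
Section Basic.
Variables (R : realType) (n : nat).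
Implicit Types (a x y v : 'rV[R]_n).

Lemma dotvC a x : dotv a x = dotv x a.
Proof. by apply: eq_bigr => j _; rewrite mulrC. Qed.

Lemma dotvDr a x y : dotv a (x + y) = dotv a x + dotv a y.
Proof. by rewrite /dotv -big_split; apply: eq_bigr => j _; rewrite mxE mulrDr. Qed.

Lemma dotvDl a x y : dotv (x + y) a = dotv x a + dotv y a.
Proof. by rewrite dotvC dotvDr !(dotvC a). Qed.

Lemma dotvZr a x (t : R) : dotv a (t *: x) = t * dotv a x.
Proof. by rewrite /dotv mulr_sumr; apply: eq_bigr => j _; rewrite mxE mulrCA. Qed.

Lemma dotvZl a x (t : R) : dotv (t *: a) x = t * dotv a x.
Proof. by rewrite dotvC dotvZr dotvC. Qed.

Lemma dotvNl a x : dotv (- a) x = - dotv a x.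
Proof. by rewrite -scaleN1r dotvZl mulN1r. Qed.

Lemma dotvBl a x y : dotv (x - y) a = dotv x a - dotv y a.
Proof. by rewrite dotvDl dotvNl. Qed.

Lemma dotvBr a x y : dotv a (x - y) = dotv a x - dotv a y.
Proof. by rewrite !(dotvC a) dotvBl. Qed.

Lemma dotv0l x : dotv 0 x = 0.
Proof. by rewrite /dotv big1 // => j _; rewrite mxE mul0r. Qed.

Lemma dotv_const a (t : R) : dotv a (const_mx t) = t * \sum_(j < n) a ord0 j.
Proof. by rewrite /dotv mulr_sumr; apply: eq_bigr => j _; rewrite mxE mulrC. Qed.

Lemma dotv_suml (T : Type) (S : seq T) (F : T -> 'rV[R]_n) x :
  dotv (\sum_(i <- S) F i) x = \sum_(i <- S) dotv (F i) x.
Proof.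
elim: S => [|i S IH]; first by rewrite !big_nil dotv0l.
by rewrite !big_cons dotvDl IH.
Qed.

Lemma sum_const_mx (t : R) : \sum_(j < n) (const_mx t : 'rV[R]_n) ord0 j = n%:R * t.
Proof.
rewrite (eq_bigr (fun _ => t)); last by move=> j _; rewrite mxE.
by rewrite sumr_const card_ord mulr_natl.
Qed.

Lemma sum_rowD (x y : 'rV[R]_n) :
  \sum_(j < n) (x + y) ord0 j = \sum_(j < n) x ord0 j + \sum_(j < n) y ord0 j.
Proof. by rewrite -big_split; apply: eq_bigr => j _; rewrite mxE. Qed.

Lemma sum_rowN (x : 'rV[R]_n) :
  \sum_(j < n) (- x) ord0 j = - \sum_(j < n) x ord0 j.
Proof. by rewrite -sumrN; apply: eq_bigr => j _; rewrite mxE. Qed.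

Lemma sum_rowZ (t : R) (x : 'rV[R]_n) :
  \sum_(j < n) (t *: x) ord0 j = t * \sum_(j < n) x ord0 j.
Proof. by rewrite mulr_sumr; apply: eq_bigr => j _; rewrite mxE. Qed.

Definition center (x : 'rV[R]_n) : 'rV[R]_n :=
  x - const_mx ((\sum_(j < n) x ord0 j) / n%:R).

Lemma natr_div_sum (s : R) : (n = 0%N -> s = 0) -> n%:R * (s / n%:R) = s.
Proof.
move=> h; case: n h => [|m] h; first by rewrite mul0r h.
by rewrite mulrC divfK // pnatr_eq0.
Qed.

Lemma inH_center x : inH (center x).
Proof.
rewrite /inH /center sum_rowD sum_rowN sum_const_mx natr_div_sum ?subrr //.
move=> n0; move: x; rewrite n0 => x; exact: big_ord0.
Qed.

End Basic.
Section Tsig.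
Variables (R : realType) (n : nat) (A : seq 'rV[R]_n) (c : 'rV[R]_n -> option R).
Implicit Types (a x y v : 'rV[R]_n).
Local Notation supp := (supp A c).
Local Notation term := (term c).
Local Notation f := (tsig A c).
Local Notation B := (Bset A c).

Lemma tsig_ge a x : a \in supp -> term a x <= f x.
Proof.
move=> ha; rewrite /tsig.
elim: supp (head 0 supp) ha => [//|b s IH] d.
rewrite inE big_cons => /orP [/eqP -> | hs]; first by rewrite le_max lexx.
by rewrite le_max (IH d hs) orbT.
Qed.

Lemma bigmax_att (T : eqType) (s : seq T) (F : T -> R) d :
  \big[Num.max/d]_(i <- s) F i = d \/
  exists2 i, i \in s & \big[Num.max/d]_(i <- s) F i = F i.
Proof.
elim: s => [|b s IH]; first by left; rewrite big_nil.
rewrite big_cons maxEle.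
case: ifP => h.
  case: IH => [->|[i hi ->]]; [by left|right].
  by exists i; rewrite // inE hi orbT.
by right; exists b; rewrite ?inE ?eqxx.
Qed.

Lemma tsig_att x : supp != [::] -> exists2 a, a \in supp & term a x = f x.
Proof.
move=> hs; have hd : head 0 supp \in supp by case: supp hs => // b s _; rewrite inE eqxx.
rewrite /tsig; case: (bigmax_att supp (fun a => term a x) (term (head 0 supp) x)) => [->|[a ha ->]].
  by exists (head 0 supp).
by exists a.
Qed.

Lemma tsig_le x m : supp != [::] -> (forall a, a \in supp -> term a x <= m) -> f x <= m.
Proof. by move=> hs hle; have [b hb <-] := tsig_att x hs; apply: hle. Qed.

Lemma tsig_char x m : supp != [::] -> (forall a, a \in supp -> term a x <= m) ->
  (exists2 a, a \in supp & term a x = m) -> f x = m.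
Proof.
move=> hs hle [a ha ea]; apply/le_anti; rewrite (tsig_le hs hle) /=.
by rewrite -ea tsig_ge.
Qed.

Lemma inB a x : (a \in B x) = (a \in supp) && (term a x == f x).
Proof. by rewrite /Bset mem_filter andbC. Qed.

Lemma B_sub_supp x : {subset B x <= supp}.
Proof. by move=> a; rewrite inB => /andP []. Qed.

Lemma uniq_supp : uniq A -> uniq supp.
Proof. by move=> hA; rewrite filter_uniq. Qed.

Lemma uniq_B x : uniq A -> uniq (B x).
Proof. by move=> hA; rewrite filter_uniq // uniq_supp. Qed.

Lemma B_nil x : supp != [::] -> B x != [::].
Proof.
move=> hs; have [a ha ea] := tsig_att x hs.
apply/negP => /eqP h; have : a \in B x by rewrite inB ha ea eqxx.
by rewrite h.
Qed.

Lemma tsig_shift x y k : supp != [::] ->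
  (forall a, a \in supp -> term a y = term a x + k) ->
  f y = f x + k /\ B y = B x.
Proof.
move=> hs h.
have fy : f y = f x + k.
  apply: tsig_char => //.
    by move=> a ha; rewrite h // lerD2r tsig_ge.
  by have [a ha ea] := tsig_att x hs; exists a => //; rewrite h // ea.
split=> //; rewrite /Bset; apply: eq_in_filter => a ha.
by rewrite h // fy; apply/eqP/eqP => [/addIr|->].
Qed.

End Tsig.
Section Farkas.
Variables (R : realType) (n : nat).
Implicit Types (a b x y v p q : 'rV[R]_n) (P : seq 'rV[R]_n).

Fixpoint cone P b : Prop :=
  match P with
  | [::] => b = 0
  | p :: P' => exists2 t : R, 0 <= t & cone P' (b - t *: p)
  end.

Lemma dotv_self_gt0 b : b != 0 -> 0 < dotv b b.
Proof.
move=> hb.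
have [j hj] : exists j, b ord0 j != 0.
  apply/existsP; apply: contraNT hb; rewrite negb_exists => /forallP h.
  apply/eqP/rowP => j; rewrite mxE; exact/eqP/negbNE/h.
have h : 0 < b ord0 j * b ord0 j by rewrite lt0r mulf_neq0 //= (sqr_ge0 _).
rewrite /dotv (bigD1 j) //=; apply: (lt_le_trans h); rewrite lerDl.
by apply: sumr_ge0 => i _; exact: (sqr_ge0 _).
Qed.

Lemma cone_map P p (k : 'rV[R]_n -> R) x : (forall q, q \in P -> k q <= 0) ->
  cone [seq q - k q *: p | q <- P] x -> exists2 s, s <= 0 & cone P (x + s *: p).
Proof.
elim: P x => [|q P IH] x hk /=.
  by move=> ->; exists 0; rewrite ?scale0r ?addr0.
case=> t ht hc.
have hk' : forall q', q' \in P -> k q' <= 0 by move=> q' hq'; apply: hk; rewrite inE hq' orbT.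
have [s hs hc'] := IH _ hk' hc.
exists (t * k q + s).
  have hkq : k q <= 0 by apply: hk; rewrite inE eqxx.
  nra.
exists t => //.
suff -> : x + (t * k q + s) *: p - t *: q = x - t *: (q - k q *: p) + s *: p by [].
by apply/rowP => j; rewrite !mxE; ring.
Qed.

Lemma farkas_k k : forall P b, size P = k -> cone P b \/
  exists v, (forall q, q \in P -> dotv v q <= 0) /\ 0 < dotv v b.
Proof.
elim: k => [|k IH] P b.
  case: P => // _ /=.
  have [->|hb] := eqVneq b 0; first by left.
  by right; exists b; split => //; exact: dotv_self_gt0.
case: P => // p P' [hs].
have [hc|[v [hv hvb]]] := IH P' b hs.
  by left; exists 0; rewrite // scale0r subr0.
have [hvp|hvp] := leP (dotv v p) 0.
  right; exists v; split => // q; rewrite inE => /orP [/eqP ->|hq] //; exact: hv.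
pose kq q := dotv v q / dotv v p.
have hvp0 : dotv v p != 0 by rewrite gt_eqF.
have hsz : size [seq q - kq q *: p | q <- P'] = k by rewrite size_map.
have [hc|[u [hu hub]]] := IH _ (b - kq b *: p) hsz.
  have hk : forall q, q \in P' -> kq q <= 0.
    by move=> q hq; rewrite /kq pmulr_lle0 ?invr_gt0 // hv.
  have [s hs0 hcs] := cone_map hk hc.
  left; exists (kq b - s).
    have : 0 < kq b by rewrite /kq divr_gt0.
    lra.
  suff -> : b - (kq b - s) *: p = b - kq b *: p + s *: p by [].
  by apply/rowP => j; rewrite !mxE; ring.
right; exists (u - (dotv u p / dotv v p) *: v); split.
  move=> q; rewrite inE => /orP [/eqP ->|hq].
    rewrite dotvBl dotvZl mulfVK //; lra.
  have := hu (q - kq q *: p) (map_f _ hq).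
  rewrite dotvBl dotvZl dotvBr dotvZr /kq.
  suff -> : dotv u p / dotv v p * dotv v q = dotv v q / dotv v p * dotv u p by [].
  by ring.
move: hub; rewrite dotvBl dotvZl dotvBr dotvZr /kq.
suff -> : dotv u p / dotv v p * dotv v b = dotv v b / dotv v p * dotv u p by [].
by ring.
Qed.

Lemma farkas P b : cone P b \/
  exists v, (forall q, q \in P -> dotv v q <= 0) /\ 0 < dotv v b.
Proof. exact: (@farkas_k (size P) P b (erefl _)). Qed.

Lemma cone_weights (S : seq 'rV[R]_n) (h : 'rV[R]_n -> 'rV[R]_n) x : uniq S ->
  cone (map h S) x -> exists mu : 'rV[R]_n -> R,
    (forall a, 0 <= mu a) /\ x = \sum_(a <- S) mu a *: h a.
Proof.
elim: S x => [|a S IH] x /=.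
  by move=> _ ->; exists (fun _ => 0); rewrite big_nil.
case/andP=> haS hS [t ht hc].
have [mu [hmu ex]] := IH _ hS hc.
exists (fun z => if z == a then t else mu z); split.
  by move=> z; case: (z == a).
rewrite big_cons eqxx.
rewrite (eq_big_seq (fun z => mu z *: h z)); last first.
  move=> z hz; have -> : (z == a) = false by apply/negbTE; apply: contraNneq haS => <-.
  by [].
by rewrite -ex addrC subrK.
Qed.

End Farkas.
Section MinLemma.
Variable (R : realType).
Lemma fin_min (T : eqType) (s : seq T) (F : T -> R) :
  exists2 e : R, 0 < e & forall x, x \in s -> 0 < F x -> e <= F x.
Proof.
elim: s => [|x s [e he IH]]; first by exists 1.
exists (if 0 < F x then Num.min e (F x) else e).
  by case: ifP => // h; rewrite lt_min he h.
move=> y; rewrite inE => /orP [/eqP ->|hy] hF.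
  by rewrite hF ge_min lexx orbT.
case: ifP => _; last exact: IH.
by rewrite ge_min IH.
Qed.
End MinLemma.
Section Relint.
Variables (R : realType) (n : nat) (S : seq 'rV[R]_n).
Local Notation m := (size S).

Definition Xm : 'M[R]_(m, n) := \matrix_(i, j) (nth 0 S i) ord0 j.
Definition Om : 'M[R]_(m, 1) := const_mx 1.
Definition Mm : 'M[R]_(m, n + 1) := row_mx Xm Om.

Lemma sumS (V : zmodType) (F : 'rV[R]_n -> V) :
  \sum_(a <- S) F a = \sum_(i < m) F (nth 0 S i).
Proof. by rewrite (big_nth 0) big_mkord. Qed.

Lemma rowX (D : 'rV[R]_m) :
  D *m Xm = \sum_(i < m) D 0 i *: nth 0 S i.
Proof.
apply/rowP => j; rewrite !mxE summxE; apply: eq_bigr => i _.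
by rewrite !mxE.
Qed.

Lemma rowO (D : 'rV[R]_m) : (D *m Om) 0 0 = \sum_(i < m) D 0 i.
Proof. by rewrite !mxE; apply: eq_bigr => i _; rewrite mxE mulr1. Qed.

Definition vw (D : 'rV[R]_m) (a : 'rV[R]_n) : R := \sum_(i < m | nth 0 S i == a) D 0 i.

Lemma vw_nth (D : 'rV[R]_m) (k : 'I_m) : uniq S -> vw D (nth 0 S k) = D 0 k.
Proof.
move=> hS; rewrite /vw (big_pred1 k) // => i.
by rewrite nth_uniq.
Qed.

Lemma pos_relint (w : 'rV[R]_n -> R) p : uniq S ->
  (forall a, a \in S -> 0 < w a) -> \sum_(a <- S) w a = 1 ->
  p = \sum_(a <- S) w a *: a -> in_relint_conv S p.
Proof.
move=> hS hw hw1 hp; split.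
  by exists w; split => // a ha; apply: ltW; apply: hw.
have [e0 he0 he0w] := fin_min S w.
pose Pv := pinvmx Mm.
pose K := \sum_(i < n + 1) \sum_(k < m) `|Pv i k|.
have hK : 0 <= K by apply: sumr_ge0 => i _; apply: sumr_ge0 => k _.
exists (e0 / (K + 1)); split; first by rewrite divr_gt0 // ltr_pwDr.
move=> q [u' [hu'1 hq]] hqp.
pose r : 'rV[R]_(n + 1) := row_mx (q - p) 0.
pose U : 'rV[R]_m := \row_i u' (nth 0 S i).
pose W : 'rV[R]_m := \row_i w (nth 0 S i).
have hr : r = (U - W) *m Mm.
  rewrite /Mm mul_mx_row mulmxBl mulmxBl !rowX /r; congr row_mx.
    rewrite hq hp !sumS; congr (_ - _); apply: eq_bigr => i _; by rewrite mxE.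
  apply/rowP => i0; rewrite ord1 !mxE.
  have := rowO U; have := rowO W.
  rewrite !mxE => -> ->.
  have e1 : \sum_(i < m) U 0 i = 1.
    by rewrite -hu'1 sumS; apply: eq_bigr => i _; rewrite mxE.
  have e2 : \sum_(i < m) W 0 i = 1.
    by rewrite -hw1 sumS; apply: eq_bigr => i _; rewrite mxE.
  by rewrite e1 e2 subrr.
pose d := r *m Pv.
have hd : d *m Mm = r by rewrite /d mulmxKpV // hr submxMl.
move: hd; rewrite /Mm mul_mx_row /r => /eq_row_mx [hdX hdO].
pose g := vw d.
have hgn : forall k : 'I_m, g (nth 0 S k) = d 0 k by move=> k; apply: vw_nth.
exists (fun a => w a + g a); split.
- move=> a ha.
  have hk : (index a S < m)%N by rewrite index_mem.
  have ea : a = nth 0 S (Ordinal hk) by rewrite /= nth_index.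
  rewrite ea hgn -ea.
  set eps := e0 / (K + 1).
  have heps : 0 < eps by rewrite divr_gt0 // ltr_pwDr.
  have hri : forall i, `|r 0 i| <= eps.
    move=> i; rewrite /r mxE; case: split => j; last by rewrite mxE normr0 ltW.
    rewrite !mxE; apply: ltW; apply: hqp.
  have hdk : `|d 0 (Ordinal hk)| <= eps * K.
    rewrite /d mxE.
    have h1 := ler_norm_sum (index_enum 'I_(n + 1)) (fun i : 'I_(n + 1) => r 0 i * Pv i (Ordinal hk)) xpredT.
    apply: (le_trans h1).
    have h2 : \sum_(i <- index_enum 'I_(n + 1) | xpredT i) `|r 0 i * Pv i (Ordinal hk)| <=
              \sum_(i <- index_enum 'I_(n + 1) | xpredT i) eps * `|Pv i (Ordinal hk)|.
      by apply: ler_sum => i _; rewrite normrM; apply: ler_wpM2r.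
    apply: (le_trans h2).
    rewrite -mulr_sumr; apply: ler_wpM2l; first exact: ltW.
    rewrite /K; apply: ler_sum => i _.
    by rewrite (bigD1 (Ordinal hk)) //= lerDl sumr_ge0.
  have hwa : e0 <= w a by apply: he0w => //; apply: hw.
  have he : eps * K < e0.
    rewrite /eps mulrAC ltr_pdivrMr ?ltr_pwDr // ltr_pM2l //.
    by rewrite ltrDl.
  have := ler_norm (- d 0 (Ordinal hk)); rewrite normrN.
  lra.
- rewrite big_split /= hw1 sumS (eq_bigr (fun i => d 0 i)); last by move=> i _; apply: hgn.
  by rewrite -rowO hdO mxE addr0.
- rewrite (eq_bigr (fun a => w a *: a + g a *: a)); last by move=> a _; rewrite scalerDl.
  rewrite big_split /= -hp sumS (eq_bigr (fun i => d 0 i *: nth 0 S i)); last by move=> i _; rewrite hgn.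
  by rewrite -rowX hdX addrC subrK.
Qed.

End Relint.
Section RelintPos.
Variables (R : realType) (n : nat).

Lemma sum_cst (T : Type) (S : seq T) (t : R) : \sum_(a <- S) t = (size S)%:R * t.
Proof.
elim: S => [|a S IH]; first by rewrite big_nil mul0r.
by rewrite big_cons IH /= -addn1 natrD; ring.
Qed.

Lemma relint_pos (S : seq 'rV[R]_n) p : in_relint_conv S p ->
  exists w : 'rV[R]_n -> R, [/\ forall a, a \in S -> 0 < w a,
    \sum_(a <- S) w a = 1 & p = \sum_(a <- S) w a *: a].
Proof.
move=> [[w0 [hw0 hw01 hp]] [e [he hrel]]].
have hN : 0 < (size S)%:R :> R.
  rewrite ltr0n lt0n; apply/eqP => /size0nil hS0.
  by move: hw01; rewrite hS0 big_nil => /eqP; rewrite eq_sym oner_eq0.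
set N := (size S)%:R : R in hN.
set s := \sum_(a <- S) a.
pose b := N^-1 *: s.
pose M := \sum_(j < n) `|p 0 j - b 0 j|.
have hM : 0 <= M by apply: sumr_ge0.
pose eps := e / (2 * (M + 1)).
have hM1 : 0 < 2 * (M + 1) by lra.
have heps : 0 < eps by rewrite divr_gt0.
have epsE : eps * (2 * (M + 1)) = e by rewrite /eps mulfVK // gt_eqF.
pose q := p + eps *: (p - b).
have hsumc : forall t : R, \sum_(a <- S) t = N * t.
  by move=> t; rewrite sum_cst.
have [u [hu hu1 hq]] : in_conv S q.
  apply: hrel.
    exists (fun a => (1 + eps) * w0 a - eps / N); split.
      by rewrite sumrB -mulr_sumr hw01 hsumc mulrCA divff ?gt_eqF // mulr1 mulr1 addrK.
    rewrite (eq_bigr (fun a => (1 + eps) *: (w0 a *: a) - (eps / N) *: a)); last first.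
      by move=> a _; rewrite scalerBl scalerA.
    rewrite sumrB -!scaler_sumr -hp -/s /q /b.
    apply/rowP => j; rewrite !mxE; field.
    by rewrite gt_eqF.
  move=> j.
  have -> : q 0 j - p 0 j = eps * (p 0 j - b 0 j) by rewrite /q !mxE; ring.
  have hj : `|p 0 j - b 0 j| <= M.
    by rewrite /M (bigD1 j) //= lerDl sumr_ge0.
  rewrite normrM gtr0_norm //.
  apply: (le_lt_trans (ler_wpM2l (ltW heps) hj)).
  nra.
have h1e : 0 < 1 + eps by lra.
have hc : 0 < eps / N by rewrite divr_gt0.
exists (fun a => (u a + eps / N) / (1 + eps)); split.
- move=> a ha; apply: divr_gt0 => //; have := hu a ha; lra.
- rewrite -mulr_suml big_split /= hu1 hsumc mulrCA divff ?gt_eqF // mulr1.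
  by rewrite divff // gt_eqF.
- rewrite (eq_bigr (fun a => (1 + eps)^-1 *: (u a *: a) + ((1 + eps)^-1 * (eps / N)) *: a)); last first.
    by move=> a _; rewrite mulrDl scalerDl !scalerA mulrC [_^-1 * (_ / _)]mulrC.
  rewrite big_split /= -!scaler_sumr -hq -/s /q /b.
  apply/rowP => j; rewrite !mxE; field.
  by rewrite gt_eqF //= gt_eqF.
Qed.

End RelintPos.
Section Main.
Variables (R : realType) (n : nat) (A : seq 'rV[R]_n) (c : 'rV[R]_n -> option R).
Variable (d : R).
Hypothesis hA : uniq A.
Hypothesis hsupp : supp A c != [::].
Hypothesis hd : forall a, a \in supp A c -> \sum_(j < n) a ord0 j = d.
Implicit Types (a x y z v : 'rV[R]_n).
Local Notation supp := (supp A c).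
Local Notation term := (term c).
Local Notation f := (tsig A c).
Local Notation B := (Bset A c).

Definition minz y := inH y /\ forall z, inH z -> f y <= f z.

Lemma term_shift a x y : term a (x + y) = term a x + dotv a y.
Proof. by rewrite /term dotvDr addrA. Qed.

Lemma dotv_const_supp a t : a \in supp -> dotv a (const_mx t) = t * d.
Proof. by move=> ha; rewrite dotv_const hd. Qed.

Lemma center_term a x : a \in supp ->
  term a (center x) = term a x + - ((\sum_(j < n) x ord0 j) / n%:R * d).
Proof.
move=> ha; rewrite /center -[_ - _]/(x + - _) term_shift.
have -> : forall t : R, - (const_mx t : 'rV[R]_n) = const_mx (- t) by move=> t; apply/rowP => j; rewrite !mxE.
by rewrite dotv_const_supp // mulNr.
Qed.

Lemma B_center x : B (center x) = B x.
Proof.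
by have [_ ->] := tsig_shift hsupp (fun a ha => center_term x ha).
Qed.

Lemma wsum_term (S : seq 'rV[R]_n) (w : 'rV[R]_n -> R) lam z :
  const_mx lam = \sum_(a <- S) w a *: a ->
  \sum_(a <- S) w a * term a z = \sum_(a <- S) w a * coef c a + lam * \sum_(j < n) z ord0 j.
Proof.
move=> hl.
rewrite (eq_bigr (fun a => w a * coef c a + dotv (w a *: a) z)); last first.
  by move=> a _; rewrite /term mulrDr dotvZl.
by rewrite big_split /= -dotv_suml -hl dotvC dotv_const.
Qed.

Lemma wsum_le (S : seq 'rV[R]_n) (w : 'rV[R]_n -> R) z :
  (forall a, a \in S -> 0 <= w a) -> \sum_(a <- S) w a = 1 -> {subset S <= supp} ->
  \sum_(a <- S) w a * term a z <= f z.
Proof.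
move=> hw hw1 hS.
have -> : f z = \sum_(a <- S) w a * f z by rewrite -mulr_suml hw1 mul1r.
rewrite big_seq_cond [X in _ <= X]big_seq_cond; apply: ler_sum => a /andP [ha _].
by apply: ler_wpM2l; [exact: hw | exact: tsig_ge (hS a ha)].
Qed.

Lemma wsum_eq (S : seq 'rV[R]_n) (w : 'rV[R]_n -> R) y :
  \sum_(a <- S) w a = 1 -> {subset S <= B y} ->
  \sum_(a <- S) w a * term a y = f y.
Proof.
move=> hw1 hS.
rewrite (eq_big_seq (fun a => w a * f y)); first by rewrite -mulr_suml hw1 mul1r.
by move=> a ha; have := hS a ha; rewrite inB => /andP [_ /eqP ->].
Qed.

Lemma cell_min (S : seq 'rV[R]_n) (w : 'rV[R]_n -> R) lam :
  (forall a, a \in S -> 0 <= w a) -> \sum_(a <- S) w a = 1 ->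
  const_mx lam = \sum_(a <- S) w a *: a -> {subset S <= supp} ->
  forall y, inH y -> {subset S <= B y} -> minz y.
Proof.
move=> hw hw1 hl hS y hy hSy; split => // z hz.
rewrite -(wsum_eq hw1 hSy); apply: le_trans (wsum_le z hw hw1 hS).
by rewrite !(wsum_term _ hl) hy hz.
Qed.

Lemma cell_sub (S : seq 'rV[R]_n) (w : 'rV[R]_n -> R) lam y0 :
  (forall a, a \in S -> 0 < w a) -> \sum_(a <- S) w a = 1 ->
  const_mx lam = \sum_(a <- S) w a *: a -> {subset S <= supp} ->
  inH y0 -> {subset S <= B y0} ->
  forall y, minz y -> {subset S <= B y}.
Proof.
move=> hw hw1 hl hS hy0 hSy0 y [hy hmin] a0 ha0.
have hfy0 := wsum_eq hw1 hSy0.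
rewrite (wsum_term _ hl) hy0 mulr0 addr0 in hfy0.
have hty := wsum_term y hl; rewrite hy mulr0 addr0 in hty.
have hle := hmin y0 hy0.
have hsum : \sum_(a <- S) w a * (f y - term a y) <= 0.
  rewrite (eq_bigr (fun a => w a * f y - w a * term a y)); last by move=> a _; rewrite mulrBr.
  by rewrite sumrB -mulr_suml hw1 mul1r hty hfy0 subr_le0.
have hge : forall a, a \in S -> 0 <= w a * (f y - term a y).
  by move=> a ha; rewrite mulr_ge0 ?subr_ge0 ?tsig_ge ?hS // ltW // hw.
have hrest : 0 <= \sum_(a <- rem a0 S) w a * (f y - term a y).
  rewrite big_seq_cond; apply: sumr_ge0 => a /andP [ha _].
  by apply: hge; apply: (mem_rem ha).
move: hsum; rewrite (big_rem _ ha0) /= => hsum.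
have h0 : w a0 * (f y - term a0 y) <= 0 by lra.
have hwa0 := hw a0 ha0.
have hta0 : term a0 y <= f y by apply: tsig_ge; apply: hS.
have : f y - term a0 y <= 0 by rewrite -(pmulr_rle0 _ hwa0).
move=> h1; rewrite inB hS //=; apply/eqP; lra.
Qed.

Definition Lc : 'rV[R]_n := const_mx (d / n%:R).

Definition good (S : seq 'rV[R]_n) (w : 'rV[R]_n -> R) :=
  [/\ forall a, 0 <= w a, \sum_(a <- S) w a = 1 & \sum_(a <- S) w a *: a = Lc].

Lemma dotv_center_supp v a : a \in supp -> dotv (center v) a = dotv v (a - Lc).
Proof.
move=> ha; rewrite /center /Lc dotvBl dotvBr.
rewrite [dotv (const_mx _) a]dotvC !dotv_const (hd ha).
by ring.
Qed.

Lemma inH_add y v (e : R) : inH y -> inH v -> inH (y + e *: v).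
Proof. by rewrite /inH sum_rowD sum_rowZ => -> ->; rewrite mulr0 addr0. Qed.

Lemma count_lt (S : seq 'rV[R]_n) a0 : a0 \in S -> (size [seq a <- S | a != a0] < size S)%N.
Proof.
move=> ha0; rewrite size_filter.
have h1 : (0 < count (pred1 a0) S)%N by rewrite -has_count has_pred1.
have -> : count (fun a => a != a0) S = count (predC (pred1 a0)) S by apply: eq_count.
rewrite -(count_predC (pred1 a0) S).
by rewrite -[X in (X < _)%N]add0n ltn_add2r.
Qed.

Lemma step y a0 : minz y -> a0 \in B y ->
  (exists2 w, good (B y) w & 0 < w a0) \/
  (exists y', minz y' /\ (size (B y') < size (B y))%N).
Proof.
move=> hy ha0.
have hSu := uniq_B c y hA.
pose h := fun a : 'rV[R]_n => a - Lc.
case: (farkas [seq h a | a <- B y] (- h a0)) => [hc|[v [hv hvb]]].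
- left.
  have [mu [hmu e]] := cone_weights hSu hc.
  pose w' := fun a : 'rV[R]_n => mu a + (a == a0)%:R.
  have hs1 : \sum_(a <- B y) (a == a0)%:R *: h a = h a0.
    rewrite (bigD1_seq a0) //= eqxx scale1r big1 ?addr0 // => a /negbTE ->.
    by rewrite scale0r.
  have hs2 : \sum_(a <- B y) ((a == a0)%:R : R) = 1.
    rewrite (bigD1_seq a0) //= eqxx big1 ?addr0 // => a /negbTE ->.
    by [].
  pose T := \sum_(a <- B y) w' a.
  have hT : 1 <= T.
    rewrite /T big_split /= hs2 lerDr; exact: sumr_ge0.
  have hT0 : T != 0 by rewrite gt_eqF //; lra.
  have e0 : \sum_(a <- B y) w' a *: h a = 0.
    rewrite (eq_bigr (fun a => mu a *: h a + (a == a0)%:R *: h a)); last first.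
      by move=> a _; rewrite scalerDl.
    by rewrite big_split /= hs1 -e addNr.
  have e1 : \sum_(a <- B y) w' a *: a = T *: Lc.
    apply/eqP; rewrite -subr_eq0; apply/eqP; rewrite -[RHS]e0 /T scaler_suml -sumrB.
    by apply: eq_bigr => a _; rewrite /h scalerBr.
  exists (fun a => w' a / T); last first.
    apply: divr_gt0; last lra.
    rewrite /w' eqxx /=; have := hmu a0; lra.
  split.
  + move=> a; apply: divr_ge0; last lra.
    by rewrite /w' addr_ge0 // ler0n.
  + by rewrite -mulr_suml divff.
  + rewrite (eq_bigr (fun a => T^-1 *: (w' a *: a))); last first.
      by move=> a _; rewrite scalerA mulrC.
    by rewrite -scaler_sumr e1 scalerA mulVf // scale1r.
- right.
  pose v' := center v.
  have hv' : forall a, a \in B y -> dotv v' a <= 0.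
    move=> a ha; rewrite dotv_center_supp; last exact: B_sub_supp ha.
    by apply: hv; apply: map_f.
  have hva0 : dotv v' a0 < 0.
    rewrite dotv_center_supp; last exact: B_sub_supp ha0.
    by move: hvb; rewrite dotvC dotvNl dotvC oppr_gt0.
  pose T' := [seq a <- supp | a \notin B y].
  have hgap : forall a, a \in supp -> a \notin B y -> term a y < f y.
    move=> a ha haB; rewrite lt_neqAle tsig_ge // andbT.
    by apply: contraNneq haB => he; rewrite inB ha he eqxx.
  have [e he hF] := fin_min T' (fun a => (f y - term a y) / (`|dotv v' a| + 1)).
  pose y' := y + e *: v'.
  have hterm : forall a, term a y' = term a y + e * dotv v' a.
    by move=> a; rewrite term_shift dotvZr dotvC.
  have hy'H : inH y' by apply: inH_add; [exact: hy.1 | exact: inH_center].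
  have hout : forall a, a \in supp -> a \notin B y -> term a y' < f y.
    move=> a ha haB.
    have hg := hgap a ha haB.
    have hpos1 : 0 < `|dotv v' a| + 1 by rewrite ltr_pwDr.
    have := hF a; rewrite mem_filter haB ha => /(_ isT).
    rewrite divr_gt0 ?subr_gt0 // => /(_ isT).
    rewrite ler_pdivlMr // => hle.
    have := ler_norm (dotv v' a).
    rewrite hterm; nra.
  have hle : f y' <= f y.
    apply: tsig_le => // a ha.
    case haB : (a \in B y); last by apply: ltW; apply: hout => //; rewrite haB.
    rewrite hterm; have := haB; rewrite inB => /andP [_ /eqP ->].
    have := hv' a haB; nra.
  have hfy : f y' = f y by apply: le_anti; rewrite hle /=; apply: hy.2.
  have hmin' : minz y'.
    by split => // z hz; rewrite hfy; apply: hy.2.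
  exists y'; split => //.
  apply: (@leq_ltn_trans (size [seq a <- B y | a != a0])); last exact: count_lt.
  apply: uniq_leq_size; first exact: uniq_B.
  move=> a; rewrite inB => /andP [ha /eqP hta].
  case haB : (a \in B y); last first.
    by have := hout a ha; rewrite haB hta hfy ltxx => /(_ isT).
  rewrite mem_filter haB andbT; apply/eqP => ea; subst a.
  move: hta; rewrite hterm hfy => hta.
  have := ha0; rewrite inB => /andP [_ /eqP hta0].
  have := hva0; nra.
Qed.

Lemma all_or (T : seq 'rV[R]_n) (P : 'rV[R]_n -> Prop) (Q : Prop) :
  (forall a, a \in T -> P a \/ Q) -> (forall a, a \in T -> P a) \/ Q.
Proof.
elim: T => [|b T IH] h; first by left.
have [hb|hq] := h b (mem_head _ _); last by right.
have hT' : forall a, a \in T -> a \in b :: T by move=> a ha; rewrite inE ha orbT.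
have [hT|hq] := IH (fun a ha => h a (hT' a ha)); last by right.
by left => a; rewrite inE => /orP [/eqP ->|]; [|apply: hT].
Qed.

Lemma avg (S T : seq 'rV[R]_n) :
  (forall a0, a0 \in T -> exists2 w, good S w & 0 < w a0) ->
  exists W : 'rV[R]_n -> R, [/\ forall a, 0 <= W a, forall a0, a0 \in T -> 0 < W a0,
    \sum_(a <- S) W a = (size T)%:R & \sum_(a <- S) W a *: a = (size T)%:R *: Lc].
Proof.
elim: T => [|b T IH] h.
  exists (fun _ => 0); split => //; first by rewrite big1.
  by rewrite big1 ?scale0r // => a _; rewrite scale0r.
have hT' : forall a, a \in T -> a \in b :: T by move=> a ha; rewrite inE ha orbT.
have [W [hW0 hWp hW1 hWL]] := IH (fun a ha => h a (hT' a ha)).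
have [w [hw0 hw1 hwL] hwb] := h b (mem_head _ _).
exists (fun a => W a + w a); split.
- by move=> a; rewrite addr_ge0.
- move=> a; rewrite inE => /orP [/eqP ->|ha].
    by rewrite ltr_pwDr.
  by rewrite ltr_wpDr // hWp.
- by rewrite big_split /= hW1 hw1 -natr1.
- rewrite (eq_bigr (fun a => W a *: a + w a *: a)); last by move=> a _; rewrite scalerDl.
  by rewrite big_split /= hWL hwL -natr1 scalerDl scale1r.
Qed.

Lemma central_of_min k : forall y, (size (B y) <= k)%N -> minz y ->
  exists x, exists lam, in_relint_conv (B x) (const_mx lam).
Proof.
elim: k => [|k IH] y hk hy.
  by move: hk; rewrite leqn0 size_eq0 => /eqP hB; move: (B_nil y hsupp); rewrite hB.
have [hall|[y' [hy' hlt]]] := all_or (fun a ha => step hy ha); last first.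
  by apply: (IH y') => //; rewrite -ltnS; apply: leq_trans hlt hk.
have [W [hW0 hWp hW1 hWL]] := avg hall.
have hN : 0 < (size (B y))%:R :> R.
  by rewrite ltr0n lt0n size_eq0 B_nil.
exists y, (d / n%:R).
apply: (@pos_relint R n (B y) (fun a => W a / (size (B y))%:R)).
- exact: uniq_B.
- by move=> a ha; rewrite divr_gt0 // hWp.
- by rewrite -mulr_suml hW1 divff // gt_eqF.
- rewrite (eq_bigr (fun a => (size (B y))%:R^-1 *: (W a *: a))); last first.
    by move=> a _; rewrite scalerA mulrC.
  by rewrite -scaler_sumr hWL scalerA mulVf ?gt_eqF // scale1r.
Qed.

End Main.
Unset Implicit Arguments.
Set Strict Implicit.

Theorem lemma2p7 (R : realType) (n : nat) (A : seq 'rV[R]_n)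
    (c : 'rV[R]_n -> option R)
    (hA : uniq A)
    (hpos : forall a, a \in A -> forall j, 0 <= a ord0 j)
    (hsupp : supp A c != [::])
    (hhom : homogeneous A c) :
  let f := tsig A c in
  let B := Bset A c in
  let central (x : 'rV[R]_n) :=
    exists lam : R, in_relint_conv (B x) (const_mx lam) in
  ((exists y, inH y /\ forall z, inH z -> f y <= f z) <->
   (exists x, central x)) /\
  (forall x, central x ->
     forall y, (inH y /\ forall z, inH z -> f y <= f z) <->
               (inH y /\ {subset B x <= B y})).
Proof.
move=> f B central.
have [d hd] := hhom.
have hS : forall x, {subset B x <= supp A c} by move=> x; exact: B_sub_supp.
have hBc : forall x, {subset B x <= B (center x)}.
  by move=> x a; rewrite /B (B_center hsupp hd).
have part2 : forall x, central x ->
    forall y, (inH y /\ forall z, inH z -> f y <= f z) <->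
               (inH y /\ {subset B x <= B y}).
  move=> x [lam hrel] y.
  have [w [hwp hw1 hwL]] := relint_pos hrel.
  split.
  - move=> hy; split; first exact: hy.1.
    exact: (cell_sub hwp hw1 hwL (hS x) (inH_center x) (hBc x) hy).
  - move=> [hy hsub].
    have hw0 : forall a, a \in B x -> 0 <= w a by move=> a ha; apply: ltW; apply: hwp.
    exact: (cell_min hw0 hw1 hwL (hS x) hy hsub).
split => //; split.
- move=> [y hy].
  exact: (central_of_min hA hsupp hd (leqnn _) hy).
- move=> [x hx]; exists (center x).
  by apply/(part2 x hx); split; [exact: inH_center | exact: hBc].
Qed.
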